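(* Let $R$ be a multiplicative hyperring as in the context and let $I$ be a 1-absorbing prime hyperideal of $R$. Then $\sqrt{I}$ is a prime hyperideal of $R$. Moreover, for every nonunit element $z\in R\setminus I$, the set $(I:z)$ is a prime hyperideal of $R$.
   Context: Throughout, $R$ is a commutative multiplicative hyperring: $(R,+)$ is an abelian group and $\circ:R\times R\to P^*(R)$ (nonempty subsets of $R$) is a commutative, associative hyperoperation with $a\circ(b+c)\subseteq a\circ b+a\circ c$ and $a\circ(-b)=(-a)\circ b=-(a\circ b)$ for all $a,b,c$. For nonempty $A,B\subseteq R$, $A\circ B=\bigcup_{a\in A,b\in B}a\circ b$. $R$ has an identity $1$ (i.e. $a\in a\circ 1$ for all $a$); $x$ is a unit if $1\in x\circ y$ for some $y\in R$. A hyperideal is a nonempty $I\subseteq R$ with $a-b\in I$ and $r\circ a\subseteq I$ for all $a,b\in I$, $r\in R$. All hyperideals are assumed to be $\mathbf{C}$-hyperideals: for every finite product $A=r_1\circ\cdots\circ r_n$, $A\cap I\neq\emptyset$ implies $A\subseteq I$. A prime hyperideal is a proper hyperideal $P$ such that $x\circ y\subseteq P$ implies $x\in P$ or $y\in P$. $\sqrt{I}$ is the intersection of all prime hyperideals containing $I$ (and $R$ if there are none); under the $\mathbf{C}$-hyperideal assumption, $\sqrt{I}=\{r\in R: r^n\subseteq I \text{ for some } n\in\mathbb{N}\}$. For $a\in R$, $(I:a)=\{r\in R: r\circ a\subseteq I\}$. A proper hyperideal $I$ is 1-absorbing prime if for all nonunit $x,y,z\in R$, $x\circ y\circ z\subseteq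 I$ implies $x\circ y\subseteq I$ or $z\in I$. *)

(* Defs.v *)
From mathcomp Require Import all_boot all_algebra.
Set Implicit Arguments. Unset Strict Implicit. Unset Printing Implicit Defensive.
Import GRing.Theory.
Local Open Scope ring_scope.

Definition hsubset (T : Type) (A B : T -> Prop) : Prop := forall x, A x -> B x.

Section Hyperring.
Variable R : zmodType.
Variable hm : R -> R -> R -> Prop. (* hm a b = a o b, a subset of R *)

Definition hsetmul (A B : R -> Prop) : R -> Prop :=
  fun x => exists a b, A a /\ B b /\ hm a b x.
Definition hsingle (a : R) : R -> Prop := fun x => x = a.
Definition hsetadd (A B : R -> Prop) : R -> Prop :=
  fun x => exists a b, A a /\ B b /\ x = a + b.
Definition hsetopp (A : R -> Prop) : R -> Prop := fun x => A (- x).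

Definition hprod (r : R) (rs : seq R) : R -> Prop :=
  foldl (fun A x => hsetmul A (hsingle x)) (hsingle r) rs.

Record mult_hyperring (one : R) : Prop := MultHyperring {
  hm_nonempty : forall a b, exists x, hm a b x;
  hm_comm : forall a b x, hm a b x <-> hm b a x;
  hm_assoc : forall a b c x,
    hsetmul (hm a b) (hsingle c) x <-> hsetmul (hsingle a) (hm b c) x;
  hm_distr : forall a b c, hsubset (hm a (b + c)) (hsetadd (hm a b) (hm a c));
  hm_oppr : forall a b x, hm a (- b) x <-> hsetopp (hm a b) x;
  hm_oppl : forall a b x, hm (- a) b x <-> hsetopp (hm a b) x;
  hm_one : forall a, hm a one a
}.

Definition hunit (one x : R) : Prop := exists y, hm x y one.

(* Hyperideals; following the paper's standing convention, every
   hyperideal is a C-hyperideal. *)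
Definition C_cond (I : R -> Prop) : Prop :=
  forall r rs, (exists x, hprod r rs x /\ I x) -> hsubset (hprod r rs) I.

Definition hyperideal (I : R -> Prop) : Prop :=
  [/\ exists a, I a,
      (forall a b, I a -> I b -> I (a - b)),
      (forall r a, I a -> hsubset (hm r a) I)
    & C_cond I].

Definition proper (I : R -> Prop) : Prop := exists x, ~ I x.

Definition prime_hyperideal (P : R -> Prop) : Prop :=
  [/\ hyperideal P, proper P &
      forall x y, hsubset (hm x y) P -> P x \/ P y].

(* sqrt I = intersection of all prime hyperideals containing I
   (= R when there are none) *)
Definition hradical (I : R -> Prop) : R -> Prop :=
  fun r => forall P, prime_hyperideal P -> hsubset I P -> P r.

Definition hcolon (I : R -> Prop) (a : R) : R -> Prop :=
  fun r => hsubset (hm r a) I.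

Definition one_absorbing_prime (one : R) (I : R -> Prop) : Prop :=
  [/\ hyperideal I, proper I &
      forall x y z, ~ hunit one x -> ~ hunit one y -> ~ hunit one z ->
        hsubset (hprod x [:: y; z]) I ->
        hsubset (hm x y) I \/ I z].

End Hyperring.

(* Main.v *)
From Stdlib Require Import Classical FunctionalExtensionality PropExtensionality.
Require Import Defs.
From mathcomp Require Import all_boot all_algebra.
Set Implicit Arguments. Unset Strict Implicit.
Import GRing.Theory.
Local Open Scope ring_scope.

Definition T3 (R : zmodType) (hm : R -> R -> R -> Prop) x y z q :=
  exists v, hm x y v /\ hm v z q.

Lemma T3_assoc (R : zmodType) hm one (HR : @mult_hyperring R hm one) x y z q :
  T3 hm x y z q <-> exists w, hm y z w /\ hm x w q.
Proof.
split.
- move=> [v [h1 h2]].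
  have : hsetmul hm (hm x y) (hsingle z) q by exists v, z.
  move/(hm_assoc HR) => [a [w [-> [h3 h4]]]]; by exists w.
- move=> [w [h1 h2]].
  have : hsetmul hm (hsingle x) (hm y z) q by exists x, w.
  move/(hm_assoc HR) => [v [c [h3 [-> h4]]]]; by exists v.
Qed.

Lemma T3_swap12 (R : zmodType) hm one (HR : @mult_hyperring R hm one) x y z q :
  T3 hm x y z q -> T3 hm y x z q.
Proof. move=> [v [h1 h2]]; exists v; split=> //; by apply/(hm_comm HR). Qed.

Lemma T3_swap23 (R : zmodType) hm one (HR : @mult_hyperring R hm one) x y z q :
  T3 hm x y z q -> T3 hm x z y q.
Proof.
move/(T3_assoc HR) => [w [h1 h2]]; apply/(T3_assoc HR); exists w; split=> //.
by apply/(hm_comm HR).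
Qed.

Lemma hprod2 (R : zmodType) hm x y z q :
  @hprod R hm x [:: y; z] q <-> T3 hm x y z q.
Proof.
split.
- move=> [a [b [[a' [b' [-> [-> h]]]] [-> h2]]]]; by exists a.
- move=> [v [h1 h2]]; exists v, z; split=> //; exists x, y; by [].
Qed.

Lemma absorb (R : zmodType) hm one (HR : @mult_hyperring R hm one) I
  (HI : hyperideal hm I) r a q : I a -> hm a r q -> I q.
Proof.
case: HI => _ _ Hab _ Ia h; apply: (Hab r a Ia); by apply/(hm_comm HR).
Qed.

Lemma unit2 (R : zmodType) hm one (HR : @mult_hyperring R hm one) I
  (HI : hyperideal hm I) x y :
  hunit hm one x -> hsubset (hm x y) I -> I y.
Proof.
move=> [u hu] Hs.
have : hsetmul hm (hsingle y) (hm x u) y by exists y, one; split=> //; split; [exact: hu | exact: (hm_one HR _)].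
move/(hm_assoc HR) => [p [c [hp [-> h]]]].
apply: (absorb HR HI (r:=u) (a:=p)) => //.
apply: Hs; by apply/(hm_comm HR).
Qed.

Lemma unit3 (R : zmodType) hm one (HR : @mult_hyperring R hm one) I
  (HI : hyperideal hm I) x y z :
  hunit hm one x -> hsubset (T3 hm x y z) I -> hsubset (hm y z) I.
Proof.
move=> Hu Hs w hw; apply: (unit2 HR HI Hu) => q hq.
apply: Hs; apply/(T3_assoc HR); by exists w.
Qed.

Lemma colon_prime (R : zmodType) hm one (HR : @mult_hyperring R hm one) I
  (HI : one_absorbing_prime hm one I) z :
  ~ hunit hm one z -> ~ I z -> prime_hyperideal hm (hcolon hm I z).
Proof.
case: HI => HId Hpr Habs Hz Iz.
have HId' := HId; case: HId' => [[a0 Ia0] Hsub Hab HC].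
split.
- split.
  + exists a0 => q hq; exact: (absorb HR HId Ia0 hq).
  + move=> a b Ha Hb q hq.
    have hq' : hm z (a + - b) q by apply/(hm_comm HR).
    case: (hm_distr HR hq').
    move=> s [t [hs [ht ->]]].
    have Is : I s by apply: Ha; apply/(hm_comm HR).
    have := (proj1 (hm_oppr HR z b t) ht); rewrite /hsetopp => ht'.
    have It : I (- t) by apply: Hb; apply/(hm_comm HR).
    by have := Hsub _ _ Is It; rewrite opprK.
  + move=> r a Ha x hx q hq.
    have : T3 hm r a z q by exists x.
    move/(T3_assoc HR) => [w [h1 h2]].
    exact: (Hab r w (Ha w h1) q h2).
  + move=> r rs [x [hx Hx]] y hy q hq.
    have [w hw] := hm_nonempty HR x z.
    have HCz := HC r (rcons rs z).
    rewrite /hprod foldl_rcons in HCz.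
    apply: HCz; first by exists w; split; [exists x, z | exact: Hx].
    by exists y, z.
- exists one => H; apply: Iz; apply: H; apply/(hm_comm HR); exact: (hm_one HR _).
- move=> x y Hxy.
  have HT : hsubset (T3 hm x y z) I by move=> q [v [h1 h2]]; exact: Hxy v h1 q h2.
  case: (classic (hunit hm one x)) => Ux.
    by right; apply: (unit3 HR HId Ux HT).
  case: (classic (hunit hm one y)) => Uy.
    left; apply: (unit3 HR HId Uy) => q hq; apply: HT; exact: T3_swap12 HR _ _ _ _ hq.
  have : hsubset (hprod hm x [:: z; y]) I.
    move=> q /hprod2 hq; apply: HT; exact: T3_swap23 HR _ _ _ _ hq.
  case/(Habs _ _ _ Ux Hz Uy) => [H|H]; first by left.
  right; move=> q hq; exact: (absorb HR HId H hq).
Qed.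

Lemma prime_ext (R : zmodType) hm (P Q : R -> Prop) :
  (forall r, P r <-> Q r) -> prime_hyperideal hm P -> prime_hyperideal hm Q.
Proof.
move=> H; have -> : Q = P; last by [].
apply: functional_extensionality => r; apply: propositional_extensionality.
by split => /H.
Qed.

Theorem mainTheorem1 (R : zmodType) (hm : R -> R -> R -> Prop) (one : R)
  (HR : mult_hyperring hm one) (I : R -> Prop)
  (HI : one_absorbing_prime hm one I) :
  prime_hyperideal hm (hradical hm I) /\
  (forall z : R, ~ hunit hm one z -> ~ I z ->
     prime_hyperideal hm (hcolon hm I z)).
Proof.
split; last by move=> z; apply: (colon_prime HR HI).
have HI' := HI; case: HI' => HId Hpr Habs.
case: (classic (forall x y, hsubset (hm x y) I -> I x \/ I y)) => Hp.
  have PI : prime_hyperideal hm I by split.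
  apply: (prime_ext (P:=I)) PI => r; split.
  - by move=> Ir P _ Hs; apply: Hs.
  - by move=> H; apply: H.
have [a [b [Hab [Na Nb]]]] : exists a b, hsubset (hm a b) I /\ ~ I a /\ ~ I b.
  apply: NNPP => Hn; apply: Hp => x y Hs.
  case: (classic (I x)) => hx; first by left.
  case: (classic (I y)) => hy; first by right.
  by exfalso; apply: Hn; exists x, y.
have Ua : ~ hunit hm one a.
  by move=> U; apply: Nb; apply: (unit2 HR HId U).
have Ub : ~ hunit hm one b.
  move=> U; apply: Na; apply: (unit2 HR HId U) => q hq; apply: Hab; by apply/(hm_comm HR).
have Xa : forall x, ~ hunit hm one x -> hsubset (hm x a) I.
  move=> x Ux; have : hsubset (hprod hm x [:: a; b]) I.
    move=> q /hprod2 /(T3_assoc HR) [w [h1 h2]].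
    apply: (absorb HR HId (Hab w h1) (r:=x)); by apply/(hm_comm HR).
  by case/(Habs _ _ _ Ux Ua Ub).
have Xy : forall x y, ~ hunit hm one x -> ~ hunit hm one y -> hsubset (hm x y) I.
  move=> x y Ux Uy; have : hsubset (hprod hm x [:: y; a]) I.
    move=> q /hprod2 /(T3_assoc HR) [w [h1 h2]].
    apply: (absorb HR HId (Xa y Uy w h1) (r:=x)); by apply/(hm_comm HR).
  by case/(Habs _ _ _ Ux Uy Ua).
have PC := colon_prime HR HI Ua Na.
apply: (prime_ext (P:=hcolon hm I a)) PC => r0; split.
- move=> Hr P [PId _ Pp] Hs.
  have Ur : ~ hunit hm one r0 by move=> U; apply: Na; exact: (unit2 HR HId U Hr).
  have : hsubset (hm r0 r0) P by move=> q hq; apply: Hs; exact: (@Xy r0 r0 Ur Ur q hq).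
  by case/Pp.
- move=> H; apply: H; first exact: (colon_prime HR HI Ua Na).
  move=> x Ix q hq; exact: (absorb HR HId Ix hq).
Qed.
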